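(* Let $\equiv_2$ be the equivalence relation on $\mathfrak S_n$ generated by the relations $bac\equiv_2 bca$ and $abc\equiv_2 acb$ for letters $a<b<c$ in three consecutive positions. Then two permutations of $\mathfrak S_n$ are $\equiv_2$-equivalent if and only if they have the same left-to-right minima (the same sequence of values $\sigma_j$ such that all letters to the left of $\sigma_j$ are greater than $\sigma_j$).
   Context: Permutations are words $\sigma_1\cdots\sigma_n$; the relations replace three adjacent letters forming one pattern by the same letters arranged as the other pattern, and conversely. *)

(* Defs.v *)
From mathcomp Require Import all_boot all_order all_fingroup.
From Stdlib Require Import Relations.Relation_Operators.
Set Implicit Arguments. Unset Strict Implicit. Unset Printing Implicit Defensive.

(* A permutation s of 'S_n is viewed as the word s(0) s(1) ... s(n-1)
   over the letters 0..n-1 (the shift from 1..n is irrelevant). *)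
Definition word (n : nat) (s : 'S_n) : seq nat := [seq val (s i) | i <- enum 'I_n].

Definition step2 (n : nat) (s t : 'S_n) : Prop :=
  exists (p q : seq nat) (a b c : nat), a < b /\ b < c /\
    ((word s = p ++ [:: b; a; c] ++ q /\ word t = p ++ [:: b; c; a] ++ q) \/
     (word s = p ++ [:: a; b; c] ++ q /\ word t = p ++ [:: a; c; b] ++ q)).

Definition equiv2 (n : nat) : 'S_n -> 'S_n -> Prop :=
  clos_refl_sym_trans 'S_n (@step2 n).

Definition ltr_minima (w : seq nat) : seq nat :=
  [seq nth 0 w j | j <- iota 0 (size w) & all (fun x => nth 0 w j < x) (take j w)].

(* Main.v *)
Require Import Defs.
From mathcomp Require Import all_boot all_order all_fingroup.
From Stdlib Require Import Relations.Relation_Operators.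
Set Implicit Arguments. Unset Strict Implicit. Unset Printing Implicit Defensive.

Definition wstep (u v : seq nat) : Prop :=
  exists (p q : seq nat) (a b c : nat), a < b /\ b < c /\
    ((u = p ++ [:: b; a; c] ++ q /\ v = p ++ [:: b; c; a] ++ q) \/
     (u = p ++ [:: a; b; c] ++ q /\ v = p ++ [:: a; c; b] ++ q)).

Notation crst := (clos_refl_sym_trans (seq nat) wstep).

Lemma L1aux w x s : (forall j, j \in s -> j < size w) ->
  [seq nth 0 (rcons w x) j | j <- s & all (fun y => nth 0 (rcons w x) j < y) (take j (rcons w x))]
  = [seq nth 0 w j | j <- s & all (fun y => nth 0 w j < y) (take j w)].
Proof.
elim: s => [//|j s IH] H /=.
have hj : j < size w by apply: H; rewrite inE eqxx.
have IH' := IH (fun k hk => H k (@mem_behead _ (j :: s) k hk)).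
have E1 : nth 0 (rcons w x) j = nth 0 w j by rewrite nth_rcons hj.
have E2 : take j (rcons w x) = take j w by rewrite -cats1 (takel_cat _ (ltnW hj)).
rewrite E1 E2; case: ifP => _ /=; by rewrite IH' ?E1.
Qed.

Lemma L1 w x : ltr_minima (rcons w x) =
  ltr_minima w ++ (if all (fun y => x < y) w then [:: x] else [::]).
Proof.
rewrite /ltr_minima size_rcons -addn1 iotaD filter_cat map_cat add0n L1aux; last first.
  by move=> j; rewrite mem_iota add0n.
congr (_ ++ _).
rewrite /= nth_rcons ltnn eqxx -cats1 take_size_cat //.
by case: ifP => _ /=; rewrite ?nth_cat ?ltnn ?subnn.
Qed.

Lemma lm_ext A B : ltr_minima A = ltr_minima B -> A =i B ->
  forall q, ltr_minima (A ++ q) = ltr_minima (B ++ q).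
Proof.
move=> HL HM; elim/last_ind => [|q z IH]; first by rewrite !cats0.
by rewrite -!rcons_cat !L1 IH !all_cat (eq_all_r HM).
Qed.

Lemma cat3 (p : seq nat) x y z : p ++ [:: x; y; z] = rcons (rcons (rcons p x) y) z.
Proof. by rewrite -!cats1 -!catA. Qed.

Lemma wstep_inv u v : wstep u v -> ltr_minima u = ltr_minima v /\ perm_eq u v.
Proof.
move=> [p [q [a [b [c [hab [hbc H]]]]]]].
have pe : forall x y z : nat, perm_eq (p ++ [:: x; y; z]) (p ++ [:: x; z; y]).
  move=> x y z; rewrite perm_cat2l perm_cons.
  by rewrite (perm_catC [:: y] [:: z]).
have hac : a < c by apply: ltn_trans hbc.
case: H => [[-> ->]|[-> ->]]; rewrite !catA; split; rewrite ?perm_cat2r ?pe //;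
  apply: lm_ext; try exact: perm_mem (pe _ _ _);
  rewrite !cat3 !L1 !all_rcons /=.
- have -> : (c < a) = false by apply/negbTE; rewrite -leqNgt ltnW.
  have -> : (c < b) = false by apply/negbTE; rewrite -leqNgt ltnW.
  by rewrite hab hac /= !cats0.
- have -> : (c < a) = false by apply/negbTE; rewrite -leqNgt ltnW.
  have -> : (c < b) = false by apply/negbTE; rewrite -leqNgt ltnW.
  have -> : (b < a) = false by apply/negbTE; rewrite -leqNgt ltnW.
  by rewrite /= !andbF !cats0.
Qed.


Lemma crst_inv u v : crst u v -> ltr_minima u = ltr_minima v /\ perm_eq u v.
Proof.
elim=> {u v} [u v /wstep_inv //|u|u v _ [h1 h2]|u v w _ [h1 h2] _ [h3 h4]].
- by [].
- by rewrite h1 perm_sym.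
- by rewrite h1 h3 (perm_trans h2 h4).
Qed.

Lemma crst_cong P Q u v : crst u v -> crst (P ++ u ++ Q) (P ++ v ++ Q).
Proof.
elim=> {u v} [u v [p [q [a [b [c [hab [hbc H]]]]]]]|u|u v _ IH|u v w _ IH1 _ IH2].
- apply: rst_step; exists (P ++ p), (q ++ Q), a, b, c; do 2 split => //.
  by case: H => [[-> ->]|[-> ->]]; [left|right]; rewrite !catA.
- exact: rst_refl.
- exact: rst_sym.
- exact: rst_trans IH2.
Qed.

Lemma swap3 P Q y s x : y < s -> x < s -> x != y ->
  crst (P ++ [:: y; s; x] ++ Q) (P ++ [:: y; x; s] ++ Q).
Proof.
move=> hys hxs hxy; apply: rst_sym; apply: rst_step.
case: (ltngtP x y) hxy => // h _.
- by exists P, Q, x, y, s; do 2 split => //; left.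
- by exists P, Q, y, x, s; do 2 split => //; right.
Qed.

Lemma ins S : forall P Q y x, sorted ltn (y :: S) -> x \notin y :: S ->
  crst (P ++ y :: S ++ x :: Q)
       (P ++ y :: [seq z <- S | z < x] ++ x :: [seq z <- S | x < z] ++ Q).
Proof.
elim: S => [|s S IH] P Q y x hs hx /=; first exact: rst_refl.
move: hs => /= /andP[hys hs].
have hx' : x \notin s :: S by move: hx; rewrite in_cons negb_or => /andP[].
have := IH (rcons P y) Q s x hs hx'; rewrite -!cats1 -!catA /= => H.
case: ltngtP => hsx.
  exact: H.
- have hall : all (ltn s) S by move: hs; rewrite /= (path_sortedE ltn_trans) => /andP[].
  have E1 : [seq z <- S | z < x] = [::].
    apply/eqP; rewrite -(negbK (_ == _)) -has_filter; apply/hasPn => z hz.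
    by rewrite -leqNgt; apply: ltnW; apply: ltn_trans hsx _; apply: (allP hall).
  have E2 : [seq z <- S | x < z] = S.
    apply/all_filterP/allP => z hz; apply: ltn_trans hsx _; exact: (allP hall).
  rewrite E1 E2 /= in H *; apply: rst_trans H _.
  have hxy : x != y by move: hx; rewrite in_cons negb_or => /andP[].
  exact: (@swap3 P (S ++ Q) y s x hys hsx hxy).
- by move: hx'; rewrite -hsx in_cons eqxx.
Qed.

Lemma lm_sub w z : z \in ltr_minima w -> z \in w.
Proof.
elim/last_ind: w => [//|w x IH]; rewrite L1 mem_cat mem_rcons in_cons => /orP[/IH ->|]; first by rewrite orbT.
by case: ifP => // _; rewrite inE => ->.
Qed.

Lemma lm_nil : ltr_minima [::] = [::].
Proof. by []. Qed.

Lemma keyK u : uniq u -> u != [::] -> exists M0 y S,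
  ltr_minima u = rcons M0 y /\ [/\ y \in u, (forall z, z \in u -> y <= z),
      sorted ltn (y :: S), (forall z, (z \in S) = (z \in u) && (z \notin ltr_minima u))
    & crst u (M0 ++ y :: S)].
Proof.
elim/last_ind: u => [//|u x IH]; rewrite rcons_uniq => /andP[hxu hu] _.
have [->|nz] := eqVneq u [::].
  exists [::], x, [::]; split; first by rewrite (L1 [::]).
  split.
  - by rewrite inE.
  - by move=> z; rewrite inE => /eqP ->.
  - by [].
  - move=> z; have -> : ltr_minima (rcons [::] x) = [:: x] by [].
    by rewrite /= !inE andbN.
  - exact: rst_refl.
have [M0 [y [S [hL [hy hmin hs hS hc]]]]] := IH hu nz.
have hc' : crst (rcons u x) (M0 ++ y :: S ++ x :: [::]).
  have := crst_cong [::] [:: x] hc; rewrite /= cats1 -catA /=; apply.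
have hxS : x \notin y :: S.
  rewrite in_cons negb_or hS; apply/andP; split.
    by apply/eqP => E; move: hxu; rewrite E hy.
  by rewrite (negbTE hxu).
have := ins M0 [::] hs hxS; rewrite cats0 => hi.
case hall : (all (fun z => x < z) u).
- exists (rcons M0 y), x, S; split.
    by rewrite L1 hall hL cats1.
  split.
  + by rewrite mem_rcons inE eqxx.
  + move=> z; rewrite mem_rcons inE => /orP[/eqP->//|hz]; exact: ltnW (allP hall z hz).
  + rewrite /= (path_sortedE ltn_trans); apply/andP; split.
      by apply/allP => z; rewrite hS => /andP[hz _]; exact: (allP hall z hz).
    by move: hs => /=; rewrite (path_sortedE ltn_trans) => /andP[].
  + move=> z; rewrite hS L1 hall mem_rcons mem_cat !inE.
    case: (eqVneq z x) => [->|] /=; last by rewrite orbF.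
    by rewrite (negbTE hxu) orbT.
  + apply: rst_trans hc' _; apply: rst_trans hi _.
    have E1 : [seq z <- S | z < x] = [::].
      apply/eqP; rewrite -(negbK (_ == _)) -has_filter; apply/hasPn => z hz.
      rewrite -leqNgt; apply: ltnW; apply: (allP hall); by move: hz; rewrite hS => /andP[].
    have E2 : [seq z <- S | x < z] = S.
      apply/all_filterP/allP => z hz; apply: (allP hall); by move: hz; rewrite hS => /andP[].
    by rewrite E1 E2 cat_rcons; exact: rst_refl.
- have hyx : y < x.
    move/negbT: hall => /allPn [z hz]; rewrite -leqNgt => hzx.
    rewrite ltn_neqAle (leq_trans (hmin z hz) hzx) andbT.
    by apply/eqP => E; move: hxu; rewrite -E hy.
  exists M0, y, ([seq z <- S | z < x] ++ x :: [seq z <- S | x < z]); split.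

    by rewrite L1 hall cats0.
  split.
  + by rewrite mem_rcons inE hy orbT.
  + move=> z; rewrite mem_rcons inE => /orP[/eqP->|/hmin//]; exact: ltnW.
  + rewrite /= cat_path; apply/andP; split.
      by apply: subseq_path (filter_subseq _ _) hs; exact: ltn_trans.
    rewrite /= (path_sortedE ltn_trans); apply/and3P; split.
    * have : last y [seq z <- S | z < x] \in y :: [seq z <- S | z < x] by exact: mem_last.
      by rewrite in_cons mem_filter => /orP[/eqP->|/andP[]].
    * by apply/allP => z; rewrite mem_filter => /andP[].
    * apply: sorted_filter; first exact: ltn_trans.
      by move: hs => /=; rewrite (path_sortedE ltn_trans) => /andP[].
  + move=> z; rewrite L1 hall cats0 mem_cat !inE !mem_filter mem_rcons inE hS.
    case: (eqVneq z x) => [->|hzx] /=.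
      by rewrite orbT; apply/esym/negP => /lm_sub; rewrite (negbTE hxu).
    by case: ltngtP hzx => // _ _; rewrite ?andbF ?orbF.
  + exact: rst_trans hc' hi.
Qed.

Section Perms.
Variable n : nat.

Lemma word_size (s : 'S_n) : size (word s) = n.
Proof. by rewrite /word size_map size_enum_ord. Qed.

Lemma word_nth (s : 'S_n) (i : 'I_n) : nth 0 (word s) i = val (s i).
Proof. by rewrite /word (nth_map i) ?size_enum_ord // nth_ord_enum. Qed.

Lemma word_uniq (s : 'S_n) : uniq (word s).
Proof.
rewrite /word map_inj_uniq ?enum_uniq // => i j /val_inj; exact: perm_inj.
Qed.

Lemma word_mem (s : 'S_n) z : (z \in word s) = (z < n).
Proof.
apply/idP/idP.
  by rewrite /word; case/mapP => i _ ->; exact: ltn_ord.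
rewrite /word.
move=> hz; apply/mapP; exists (s^-1 (Ordinal hz))%g; first by rewrite mem_enum.
by rewrite permKV.
Qed.

Lemma word_inj (s t : 'S_n) : word s = word t -> s = t.
Proof.
move=> E; apply/permP => i; apply: val_inj; by rewrite -!word_nth E.
Qed.

Lemma perm_of (s : 'S_n) w : perm_eq w (word s) -> exists t : 'S_n, word t = w.
Proof.
move=> pe.
have hsz : size w = n by rewrite (perm_size pe) word_size.
have hu : uniq w by rewrite (perm_uniq pe) word_uniq.
have hlt : forall i : 'I_n, nth 0 w i < n.
  by move=> i; rewrite -(word_mem s) -(perm_mem pe) mem_nth // hsz.
pose f := fun i : 'I_n => Ordinal (hlt i).
have finj : injective f.
  move=> i j /(congr1 val) /= /eqP; rewrite nth_uniq ?hsz // => /eqP; exact: val_inj.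
exists (perm finj).
rewrite /word (eq_map (g := fun i : 'I_n => nth 0 w i)); last by move=> i; rewrite permE.
have -> : map (fun i : 'I_n => nth 0 w i) (enum 'I_n) = map (nth 0 w) (map val (enum 'I_n)) by rewrite -map_comp.
by rewrite val_enum_ord -hsz -/(mkseq _ _) mkseq_nth.
Qed.

Lemma transfer u v : crst u v -> forall s t : 'S_n, word s = u -> word t = v -> equiv2 s t.
Proof.
elim=> {u v} [u v H|u|u v _ IH|u v w H1 IH1 _ IH2] s t hs ht.
- by apply: rst_step; rewrite /step2 hs ht.
- by rewrite (word_inj (etrans hs (esym ht))); exact: rst_refl.
- exact/rst_sym/IH.
- have [_ pe] := crst_inv H1.
  have pe' : perm_eq v (word s) by rewrite hs perm_sym.
  have [m hm] := perm_of pe'.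
  exact: rst_trans (IH1 s m hs hm) (IH2 m t hm ht).
Qed.

End Perms.

Lemma keyW w : uniq w -> exists S, [/\ sorted ltn S,
  (forall z, (z \in S) = (z \in w) && (z \notin ltr_minima w)) & crst w (ltr_minima w ++ S)].
Proof.
move=> hu; have [->|nz] := eqVneq w [::].
  by exists [::]; split => //; exact: rst_refl.
have [M0 [y [S [hL [hy hmin hs hS hc]]]]] := keyK hu nz.
exists S; split => //.
  by move: hs => /=; rewrite (path_sortedE ltn_trans) => /andP[].
by rewrite hL cat_rcons.
Qed.

Theorem mainTheorem11 (n : nat) (s t : 'S_n) :
  equiv2 s t <-> ltr_minima (word s) = ltr_minima (word t).
Proof.
split.
  elim=> {s t} [s t H|s|s t _ IH|s t r _ IH1 _ IH2] //.
  - exact: (proj1 (wstep_inv H)).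
  - by rewrite IH1.
move=> E.
have [S1 [h1 m1 c1]] := keyW (word_uniq s).
have [S2 [h2 m2 c2]] := keyW (word_uniq t).
have eS : S1 = S2.
  apply: (irr_sorted_eq ltn_trans ltnn) => // z.
  by rewrite m1 m2 !word_mem E.
apply: (@transfer n (word s) (word t)) => //.
apply: rst_trans c1 _; rewrite E eS; exact: rst_sym.
Qed.
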